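(* Let $n\ge3$ and $L>1$, and define $$\sigma_{1,2}=\frac{(L+n-1)+L^n(1+L(n-1))+\sqrt{\left((L+n-1)+L^n(1+L(n-1))\right)^2-4L(L^n-1)^2(n-1)}}{2L(L^n-1)},$$ $$\sigma_{2,1}=\frac{L^{n+2}(2+Ln)+(n+2L)-\sqrt{\left(L^{n+2}(2+Ln)+(n+2L)\right)^2-8Ln(L^{n+2}-1)^2}}{2L(L^{n+2}-1)}.$$ Then $\sigma_{2,1}\le\sigma_{1,2}$. *)

(* Defs.v *)
From Stdlib Require Import Reals.
Open Scope R_scope.

Definition sigma12 (n : nat) (L : R) : R :=
  let a := (L + INR n - 1) + L ^ n * (1 + L * (INR n - 1)) in
  (a + sqrt (a ^ 2 - 4 * L * (L ^ n - 1) ^ 2 * (INR n - 1)))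
  / (2 * L * (L ^ n - 1)).

Definition sigma21 (n : nat) (L : R) : R :=
  let b := L ^ (n + 2) * (2 + L * INR n) + (INR n + 2 * L) in
  (b - sqrt (b ^ 2 - 8 * L * INR n * (L ^ (n + 2) - 1) ^ 2))
  / (2 * L * (L ^ (n + 2) - 1)).

(* Main.v *)
Require Import Defs.
From Stdlib Require Import Reals Lra Psatz.
Open Scope R_scope.

Lemma div_le2 (u d : R) : 0 < d -> u <= 2 * d -> u / d <= 2.
Proof. intros Hd H. apply (Rmult_le_reg_r d); [lra|].
  unfold Rdiv; rewrite Rmult_assoc, Rinv_l; lra. Qed.

Lemma div_ge2 (u d : R) : 0 < d -> 2 * d <= u -> 2 <= u / d.
Proof. intros Hd H. apply (Rmult_le_reg_r d); [lra|].
  unfold Rdiv; rewrite Rmult_assoc, Rinv_l; lra. Qed.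

Lemma sqrt_ge (u D : R) : u ^ 2 <= D -> u <= sqrt D.
Proof. intros H. apply Rle_trans with (Rabs u); [apply Rle_abs|].
  rewrite <- sqrt_Rsqr_abs. apply sqrt_le_1_alt. unfold Rsqr. lra. Qed.

Theorem lemma2p5 (n : nat) (L : R) (Hn : (3 <= n)%nat) (HL : 1 < L) :
  sigma21 n L <= sigma12 n L.
Proof.
  unfold sigma21, sigma12. cbv zeta. rewrite pow_add.
  assert (Hx : 1 < L ^ n) by (apply Rlt_pow_R1; [lra|lia]).
  assert (HN : 3 <= INR n) by (replace 3 with (INR 3) by (simpl; lra); apply le_INR; lia).
  set (x := L ^ n) in *. set (N := INR n) in *.
  assert (HL2 : 1 < L ^ 2) by nra.
  set (y := x * L ^ 2).
  assert (Hy : 1 < y) by (unfold y; nra).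
  apply Rle_trans with 2.
  - set (b := y * (2 + L * N) + (N + 2 * L)).
    set (A := L * (y - 1)).
    assert (HA : 0 < A) by (unfold A; nra).
    assert (Hf : 4 * A - 2 * b + 2 * N * (y - 1) < 0).
    { unfold A, b. assert (0 < (y - 1) * ((2*L - 2) * (N - 2))) by
        (apply Rmult_lt_0_compat; nra). nra. }
    apply div_le2; [unfold A in HA; lra|].
    assert (b - 4 * A <= sqrt (b ^ 2 - 8 * L * N * (y - 1) ^ 2)).
    { apply sqrt_ge. assert (0 < A * (-(4 * A - 2 * b + 2 * N * (y - 1)))) by nra.
      unfold A in *. nra. }
    unfold A in *. lra.
  - set (a := L + N - 1 + x * (1 + L * (N - 1))).
    set (A := L * (x - 1)).
    assert (HA : 0 < A) by (unfold A; nra).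
    assert (Hf : 4 * A - 2 * a + (x - 1) * (N - 1) < 0).
    { unfold A, a. assert (0 <= (x - 1) * ((2*L - 1) * (N - 3))) by
        (apply Rmult_le_pos; nra). nra. }
    apply div_ge2; [unfold A in HA; lra|].
    assert (4 * A - a <= sqrt (a ^ 2 - 4 * L * (x - 1) ^ 2 * (N - 1))).
    { apply sqrt_ge. assert (0 < A * (-(4 * A - 2 * a + (x - 1) * (N - 1)))) by nra.
      unfold A in *. nra. }
    unfold A in *. lra.
Qed.
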